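(* Let $X\in\mathrm{M}(n,q)$, let $c_X(t)=\prod_h h^{\nu(h)}$ be its characteristic polynomial factored over monic irreducibles $h$, and let $v\in V=\mathbb{F}_q^{1\times n}$ be non-zero. Run the procedure IsfWitness$(v,X,c_X)$ described below. Then: (1) the procedure terminates by returning at one of the two return statements inside the while loop, and the loop condition is tested at most $\lfloor\log_2 n\rfloor+2$ times; (2) it returns $(\textsc{True},u,a)$ if and only if $v$ is an $a'$-witness for $X$ for some non-constant monic divisor $a'$ of $c_X(t)$; in that case $u\neq0$, $a=\mathrm{ord}_X(u)$ is non-constant, $\gcd(a,c_X/a)=1$, and $u\,\mathbb{F}_q[X]=\bigoplus_{h\mid a}V(h)\subseteq v\,\mathbb{F}_q[X]$, so that $v$ is an $a$-witness for $X$; (3) it returns False if and only if $o_h(\mathrm{ord}_X(v))<\nu(h)$ for every monic irreducible $h$ dividing $c_X$ such that $X$ is $f$-cyclic relative to $h$; in particular it returns False whenever $X$ is uncyclic.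
   Context: $\mathrm{M}(n,q)$ is the algebra of $n\times n$ matrices over $\mathbb{F}_q$; $V=\mathbb{F}_q^{1\times n}$ is an $\mathbb{F}_q[t]$-module with $t$ acting as $X$. For monic irreducible $h$, $V(h)=\ker h(X)^n$ is the $h$-primary component; $X$ is $f$-cyclic relative to $h$ if $V(h)$ is a cyclic $\mathbb{F}_q[X]$-module, and $X$ is uncyclic if it is $f$-cyclic relative to no irreducible divisor of $c_X$. For $w\in V$, $\mathrm{ord}_X(w)$ is the monic polynomial $a$ of least degree with $w\,a(X)=0$. For a non-zero polynomial $a$ and monic irreducible $h$, $o_h(a)$ is the largest $k$ with $h^k\mid a$. For a non-constant monic divisor $a$ of $c_X$, a vector $w$ is an $a$-witness for $X$ if $V(h)\subseteq w\,\mathbb{F}_q[X]$ for every monic irreducible divisor $h$ of $a$. All gcd's are monic. Procedure IsfWitness$(v,X,c_X)$: set $u:=v$, $g:=1$, $a:=\mathrm{ord}_X(u)$, $d:=\gcd(a,c_X/a)$, $i:=1$. While $i\leq\lfloor\log_2 n\rfloor+2$: if $d=1$ return $(\textsc{True},u,a)$; if $d=a$ return False; otherwise set $g:=g\cdot d$, $u:=v\,g(X)$, $a:=a/d$, $e:=\gcd(a,d)$, $d:=e\cdot\gcd(a/e,e)$, $i:=i+1$. *)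

(* Defs.v *)
From HB Require Import structures.
From mathcomp Require Import all_boot all_order all_algebra all_field.
From Stdlib Require Import ClassicalEpsilon.
Set Implicit Arguments. Unset Strict Implicit. Unset Printing Implicit Defensive.
Import GRing.Theory.
Local Open Scope ring_scope.

Section Defs.
Variables (F : finFieldType) (n : nat).
(* Dimension is n.+1 (so that horner_mx applies); V = 'rV[F]_n.+1, and
   t acts on V as right multiplication by X. *)
Implicit Types (X : 'M[F]_n.+1) (v w u x : 'rV[F]_n.+1) (p a h : {poly F}).

Definition pact X w p : 'rV[F]_n.+1 := w *m horner_mx X p.

Definition mgcd p a : {poly F} := (lead_coef (gcdp p a))^-1 *: gcdp p a.

Definition is_ord X w a : Prop :=
  [/\ a \is monic, pact X w a = 0 &
      forall b : {poly F}, b \is monic -> pact X w b = 0 -> (size a <= size b)%N].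
Definition ordX X w : {poly F} := epsilon (inhabits 1) (is_ord X w).

(* o_h(a): largest k with h^k | a (for a <> 0 and h non-constant) *)
Definition oh h a : nat := \max_(k < size a | h ^+ k %| a) k.

Definition monic_irr h : Prop := h \is monic /\ irreducible_poly h.

Definition Vh X h : 'M[F]_n.+1 := kermx (horner_mx X (h ^+ n.+1)).

Definition in_cyc X w x : Prop := exists p, x = pact X w p.

Definition fcyclic X h : Prop :=
  exists w, (w <= Vh X h)%MS /\ forall x, (x <= Vh X h)%MS -> in_cyc X w x.

Definition uncyclic X : Prop :=
  forall h, monic_irr h -> h %| char_poly X -> ~ fcyclic X h.

Definition witness X w a : Prop :=
  forall h, monic_irr h -> h %| a ->
    forall x, (x <= Vh X h)%MS -> in_cyc X w x.

Definition in_prim_sum X a x : Prop :=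
  exists s : seq ({poly F} * 'rV[F]_n.+1),
    (forall hy, hy \in s -> monic_irr hy.1 /\ hy.1 %| a /\ (hy.2 <= Vh X hy.1)%MS)
    /\ x = \sum_(hy <- s) hy.2.

(* outcome of the procedure; the nat is the value of i (= number of times the
   loop condition has been tested) at the moment of return *)
Inductive outcome :=
  | RetTrue of 'rV[F]_n.+1 & {poly F} & nat
  | RetFalse of nat
  | NoReturn. (* loop condition failed: fell through the while loop *)

(* the while loop; [fuel] = number of remaining admissible iterations *)
Fixpoint isf_loop X v (fuel i : nat) (u : 'rV[F]_n.+1) (g a d : {poly F}) : outcome :=
  match fuel with
  | 0 => NoReturn
  | fuel'.+1 =>
      if d == 1 then RetTrue u a i
      else if d == a then RetFalse i
      else
        let g' := g * d in
        let u' := pact X v g' in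
        let a' := a %/ d in
        let e := mgcd a' d in
        let d' := e * mgcd (a' %/ e) e in
        isf_loop X v fuel' i.+1 u' g' a' d'
  end.

Definition loop_bound : nat := (trunc_log 2 n.+1 + 2)%N.

Definition IsfWitness v X (cX : {poly F}) : outcome :=
  let a := ordX X v in
  isf_loop X v loop_bound 1 v 1 a (mgcd a (cX %/ a)).

End Defs.

(* Main.v *)
Require Import Defs.
From HB Require Import structures.
From mathcomp Require Import all_boot all_order all_algebra all_field.
From mathcomp Require Import zify.
From Stdlib Require Import Classical ClassicalEpsilon Lia.
Set Implicit Arguments. Unset Strict Implicit. Unset Printing Implicit Defensive.
Import GRing.Theory.
Local Open Scope ring_scope.


Section Val.
Variable F : finFieldType.
Implicit Types p q g h : {poly F}.

Lemma size_h_exp h k : (1 < size h)%N -> (k < size (h ^+ k))%N.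
Proof.
move=> h1; have h0 : h != 0 by rewrite -size_poly_gt0 ltnW.
have hk0 : (0 < size (h ^+ k))%N by rewrite size_poly_gt0 expf_neq0.
rewrite -(prednK hk0) size_exp ltnS; have H : (0 < (size h).-1)%N by case: (size h) h1 => [|[]].
by rewrite -{1}[k]mul1n leq_mul2r H orbT.
Qed.

Lemma size_hexp h k : h != 0 -> size (h ^+ k) = ((size h).-1 * k).+1.
Proof.
move=> h0; have hk0 : (0 < size (h ^+ k))%N by rewrite size_poly_gt0 expf_neq0.
by rewrite -(prednK hk0) size_exp.
Qed.

Lemma oh_char h p k : (1 < size h)%N -> p != 0 ->
  (forall j, (h ^+ j %| p) = (j <= k)%N) -> oh h p = k.
Proof.
move=> h1 p0 Hj; rewrite /oh; apply/eqP; rewrite eqn_leq; apply/andP; split.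
  by apply/bigmax_leqP => j; rewrite Hj.
have kp : (k < size p)%N.
  have : h ^+ k %| p by rewrite Hj.
  move=> /(dvdp_leq p0) H; exact: leq_trans (size_h_exp _ h1) H.
by apply: (@leq_bigmax_cond _ _ _ (Ordinal kp)) => /=; rewrite Hj.
Qed.

Lemma oh_exists h p : (1 < size h)%N -> p != 0 ->
  exists k, forall j, (h ^+ j %| p) = (j <= k)%N.
Proof.
move=> h1 p0.
have ex : exists i, (h ^+ i %| p) by exists 0%N; rewrite expr0 dvd1p.
have bd : forall i, h ^+ i %| p -> (i <= size p)%N.
  move=> i /(dvdp_leq p0) H; apply: ltnW; exact: leq_trans (size_h_exp _ h1) H.
have [k Hk Hmax] := ex_maxnP ex bd.
exists k => j; apply/idP/idP; first exact: Hmax.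
by move=> jk; apply: dvdp_trans Hk; apply: dvdp_exp2l.
Qed.

Lemma oh_le h p j : (1 < size h)%N -> p != 0 -> (h ^+ j %| p) = (j <= oh h p)%N.
Proof.
move=> h1 p0; have [k Hk] := oh_exists h1 p0.
by rewrite (oh_char h1 p0 Hk) Hk.
Qed.

Lemma oh_dvd h p : (1 < size h)%N -> p != 0 -> h ^+ oh h p %| p.
Proof. by move=> h1 p0; rewrite oh_le. Qed.

Lemma oh_ndvd h p : (1 < size h)%N -> p != 0 -> ~~ (h ^+ (oh h p).+1 %| p).
Proof. by move=> h1 p0; rewrite oh_le // ltnn. Qed.

Lemma oh_lt_size h p : (1 < size h)%N -> p != 0 -> (oh h p < size p)%N.
Proof.
move=> h1 p0; have := oh_dvd h1 p0 => /(dvdp_leq p0) H.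
exact: leq_trans (size_h_exp _ h1) H.
Qed.

Lemma oh_mono h p q : (1 < size h)%N -> q != 0 -> p %| q -> (oh h p <= oh h q)%N.
Proof.
move=> h1 q0 pq; have p0 : p != 0 := dvdpN0 pq q0.
by rewrite -oh_le //; apply: dvdp_trans pq; apply: oh_dvd.
Qed.

Lemma oh_scale h p c : (1 < size h)%N -> p != 0 -> c != 0 -> oh h (c *: p) = oh h p.
Proof.
move=> h1 p0 c0; apply: oh_char => //; first by rewrite scale_poly_eq0 negb_or c0.
by move=> j; rewrite dvdpZr // oh_le.
Qed.

Lemma oh_gcd h p q : (1 < size h)%N -> p != 0 -> q != 0 ->
  oh h (gcdp p q) = minn (oh h p) (oh h q).
Proof.
move=> h1 p0 q0; apply: oh_char => //; first by rewrite gcdp_eq0 negb_and p0.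
by move=> j; rewrite dvdp_gcd !oh_le // leq_min.
Qed.

Definition mirr h := h \is monic /\ irreducible_poly h.

Lemma mirr_size h : mirr h -> (1 < size h)%N.
Proof. by case=> _ []. Qed.

Lemma oh_mul h p q : mirr h -> p != 0 -> q != 0 ->
  oh h (p * q) = (oh h p + oh h q)%N.
Proof.
move=> hi p0 q0; have h1 := mirr_size hi.
have pq0 : p * q != 0 by rewrite mulf_neq0.
have [a Ha] : exists a, a = oh h p by eexists.
have [b Hb] : exists b, b = oh h q by eexists.
have [p' Ep] := dvdpP _ _ (oh_dvd h1 p0).
have [q' Eq] := dvdpP _ _ (oh_dvd h1 q0).
have hp' : ~~ (h %| p').
  apply: contraNN (oh_ndvd h1 p0) => /dvdpP [r Er].
  by rewrite {2}Ep Er exprS -mulrA dvdp_mull.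
have hq' : ~~ (h %| q').
  apply: contraNN (oh_ndvd h1 q0) => /dvdpP [r Er].
  by rewrite {2}Eq Er exprS -mulrA dvdp_mull.
apply: oh_char => // j; apply/idP/idP => [Hj|Hj].
  rewrite leqNgt; apply/negP => Hlt.
  have : h ^+ (oh h p + oh h q).+1 %| p * q by apply: dvdp_trans Hj; apply: dvdp_exp2l.
  rewrite {2}Ep {2}Eq mulrACA -exprD exprS dvdp_mul2r; last first.
    by rewrite expf_neq0 // -size_poly_gt0 ltnW.
  have cop : coprimep h p' by rewrite irreducible_poly_coprime //; case: hi.
  by rewrite Gauss_dvdpr // (negPf hq').
apply: dvdp_trans (dvdp_exp2l _ Hj) _.
by rewrite exprD dvdp_mul // oh_dvd.
Qed.

Lemma oh_div h p d : mirr h -> p != 0 -> d %| p ->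
  oh h (p %/ d) = (oh h p - oh h d)%N.
Proof.
move=> hi p0 dp; have E := divpK dp.
have d0 : d != 0 := dvdpN0 dp p0.
have q0 : p %/ d != 0 by apply: contraNneq p0 => q0; rewrite -E q0 mul0r.
by rewrite -{2}E oh_mul // addnK.
Qed.

Lemma oh1 h : (1 < size h)%N -> oh h 1 = 0%N.
Proof.
move=> h1; apply: oh_char => //; first exact: oner_neq0.
move=> j; case: j => [|j]; first by rewrite expr0 dvdpp.
apply/negbTE; apply/negP => /(dvdp_leq (oner_neq0 _)); rewrite size_poly1.
by move=> H; have := leq_trans (size_h_exp j.+1 h1) H.
Qed.

Lemma oh_self h : (1 < size h)%N -> oh h h = 1%N.
Proof.
move=> h1; have h0 : h != 0 by rewrite -size_poly_gt0 ltnW.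
apply: oh_char => // -[|[|j]]; rewrite ?expr0 ?expr1 ?dvd1p ?dvdpp //.
apply/negbTE/negP => /(dvdp_leq h0); rewrite size_hexp //.
move: h1; case: (size h) => [|[|s]] //= _; nia.
Qed.

Lemma mirr_eq g h : mirr g -> mirr h -> g %| h -> g = h.
Proof.
move=> [gm gi] [hm hi] gh; apply/eqP; rewrite -eqp_monic //.
by apply: hi => //; case: gi => g1 _; rewrite neq_ltn g1 orbT.
Qed.

Lemma oh_other g h : mirr g -> mirr h -> g != h -> oh g h = 0%N.
Proof.
move=> gi hi gh; have g1 := mirr_size gi.
have h0 : h != 0 by rewrite -size_poly_gt0 ltnW // mirr_size.
apply: oh_char => // -[|j]; first by rewrite expr0 dvd1p.
apply/negbTE/negP => H; move/negP: gh; apply; apply/eqP; apply: mirr_eq => //.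
by apply: dvdp_trans H; rewrite exprS dvdp_mulr.
Qed.

Lemma oh_exp g h k : mirr g -> mirr h -> oh g (h ^+ k) = if g == h then k else 0%N.
Proof.
move=> gi hi; have h0 : h != 0 by rewrite -size_poly_gt0 ltnW // mirr_size.
elim: k => [|k IH]; first by rewrite expr0 oh1 ?mirr_size //; case: ifP.
rewrite exprS oh_mul // ?expf_neq0 // IH.
case: eqP => [->|/eqP ne]; first by rewrite oh_self ?mirr_size.
by rewrite oh_other.
Qed.

Lemma mirr_scale p : irreducible_poly p -> mirr ((lead_coef p)^-1 *: p).
Proof.
move=> ip; have p0 := irredp_neq0 ip.
have l0 : lead_coef p != 0 by rewrite lead_coef_eq0.
split; first by rewrite monicE lead_coefZ mulVf.
split; first by rewrite size_scale ?invr_eq0 //; case: ip.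
move=> q q1; rewrite dvdpZr ?invr_eq0 // => qp.
apply: eqp_trans (ip q q1 qp) _; rewrite eqp_sym; apply: eqp_scale.
by rewrite invr_eq0.
Qed.

Lemma exists_mirr_aux k p : (size p <= k)%N -> (1 < size p)%N -> exists h, mirr h /\ h %| p.
Proof.
elim: k p => [|k IH] p pk p1; first by move: (leq_trans p1 pk).
have p0 : p != 0 by rewrite -size_poly_gt0 ltnW.
case: (classic (irreducible_poly p)) => [ip|nip].
  exists ((lead_coef p)^-1 *: p); split; first exact: mirr_scale.
  by rewrite dvdpZl ?invr_eq0 ?lead_coef_eq0.
have : exists q, [/\ size q != 1%N, q %| p & ~~ (q %= p)].
  apply: NNPP => H; apply: nip; split; first by [].
  move=> q q1 qp; case: (boolP (q %= p)) => // nq; exfalso; apply: H.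
  by exists q.
case=> q [q1 qp nqp].
have q0 : q != 0 := dvdpN0 qp p0.
have qs : (1 < size q)%N by rewrite ltn_neqAle eq_sym q1 size_poly_gt0.
have qlt : (size q < size p)%N.
  rewrite ltn_neqAle dvdp_leq // andbT; apply: contraNN nqp => /eqP E.
  by rewrite -dvdp_size_eqp // E.
have [h [hi hq]] := IH q (leq_trans qlt pk) qs.
by exists h; split => //; apply: dvdp_trans hq qp.
Qed.

Lemma exists_mirr p : (1 < size p)%N -> exists h, mirr h /\ h %| p.
Proof. exact: exists_mirr_aux. Qed.

Lemma dvdp_oh_aux k p q : (size p <= k)%N -> p != 0 -> q != 0 ->
  (forall h, mirr h -> (oh h p <= oh h q)%N) -> p %| q.
Proof.
elim: k p q => [|k IH] p q pk p0 q0 H.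
  by move: p0; rewrite -size_poly_gt0; move: pk; rewrite leqn0 => /eqP ->.
case: (ltnP 1 (size p)) => sp; last first.
  have /size_poly1P [c c0 ->] : size p == 1%N.
    by rewrite eqn_leq sp size_poly_gt0.
  by rewrite -alg_polyC dvdpZl // dvd1p.
have [h [hi hp]] := exists_mirr sp.
have h1 := mirr_size hi.
have h0 : h != 0 by rewrite -size_poly_gt0 ltnW.
have hq : h %| q.
  have hp1 : (1 <= oh h p)%N by rewrite -oh_le // expr1.
  by rewrite -(expr1 h) oh_le //; apply: leq_trans hp1 (H h hi).
have [p' Ep] : exists p' : {poly F}, p = p' * h by apply/dvdpP.
have [q' Eq] : exists q' : {poly F}, q = q' * h by apply/dvdpP.
have p'0 : p' != 0 by apply: contraNneq p0 => E; rewrite Ep E mul0r.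
have q'0 : q' != 0 by apply: contraNneq q0 => E; rewrite Eq E mul0r.
rewrite Ep Eq dvdp_mul2r //; apply: IH => //.
  rewrite Ep size_mul // in pk; have sp' : (0 < size p')%N by rewrite size_poly_gt0.
  move: pk h1 sp'; set a := size p'; set b := size h; move=> H1 H2 H3; move: H1; rewrite -subn1; lia.
move=> g gi; have := H g gi; rewrite Ep Eq !oh_mul //.
by rewrite leq_add2r.
Qed.

Lemma dvdp_oh p q : p != 0 -> q != 0 ->
  (forall h, mirr h -> (oh h p <= oh h q)%N) -> p %| q.
Proof. exact: dvdp_oh_aux. Qed.

Lemma mon_eq p q : p \is monic -> q \is monic ->
  (forall h, mirr h -> oh h p = oh h q) -> p = q.
Proof.
move=> pm qm H; apply/eqP; rewrite -eqp_monic //; apply/andP; split;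
  apply: dvdp_oh; rewrite ?monic_neq0 // => h hi; rewrite H //.
Qed.

End Val.


Section Ord.
Variables (F : finFieldType) (n : nat) (X : 'M[F]_n.+1).
Implicit Types (p q g a b : {poly F}) (w x y u : 'rV[F]_n.+1).

Lemma pactM w p q : pact X w (p * q) = pact X (pact X w p) q.
Proof. by rewrite /pact rmorphM /= -mulmxE mulmxA. Qed.

Lemma pactMC w p q : pact X w (p * q) = pact X (pact X w q) p.
Proof. by rewrite mulrC pactM. Qed.

Lemma pactD w p q : pact X w (p + q) = pact X w p + pact X w q.
Proof. by rewrite /pact rmorphD /= mulmxDr. Qed.

Lemma pactB w p q : pact X w (p - q) = pact X w p - pact X w q.
Proof. by rewrite /pact rmorphB /= mulmxBr. Qed.

Lemma pact0 w : pact X w 0 = 0.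
Proof. by rewrite /pact rmorph0 mulmx0. Qed.

Lemma pact1 w : pact X w 1 = w.
Proof. by rewrite /pact rmorph1 mulmx1. Qed.

Lemma pact0w p : pact X 0 p = 0.
Proof. by rewrite /pact mul0mx. Qed.

Lemma pactDw w x p : pact X (w + x) p = pact X w p + pact X x p.
Proof. by rewrite /pact mulmxDl. Qed.

Lemma pactZ w c p : pact X w (c *: p) = c *: pact X w p.
Proof. by rewrite /pact linearZ /= scalemxAr. Qed.

Lemma pact_char w : pact X w (char_poly X) = 0.
Proof. by rewrite /pact Cayley_Hamilton mulmx0. Qed.

Lemma is_ord_aux w k b : (size b <= k)%N -> b \is monic -> pact X w b = 0 ->
  exists a, is_ord X w a.
Proof.
elim: k b => [|k IH] b bk bm bw.
  by move: bk; rewrite leqn0 size_poly_eq0 => /eqP E; move: bm; rewrite E monicE lead_coef0 eq_sym oner_eq0.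
case: (classic (forall b', b' \is monic -> pact X w b' = 0 -> (size b <= size b')%N)) => H.
  by exists b; split.
have [b' [b'm b'w b'lt]] : exists b', [/\ b' \is monic, pact X w b' = 0 & (size b' < size b)%N].
  apply: NNPP => H2; apply: H => b' b'm b'w; rewrite leqNgt; apply/negP => lt.
  by apply: H2; exists b'.
by apply: (IH b') => //; rewrite -ltnS (leq_trans b'lt bk).
Qed.

Lemma ordX_spec w : is_ord X w (ordX X w).
Proof.
apply: epsilon_spec; apply: (@is_ord_aux w (size (char_poly X)) (char_poly X)) => //.
  exact: char_poly_monic.
exact: pact_char.
Qed.

Lemma ordX_monic w : ordX X w \is monic.
Proof. by case: (ordX_spec w). Qed.

Lemma ordX_neq0 w : ordX X w != 0.
Proof. exact: monic_neq0 (ordX_monic w). Qed.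

Lemma ordX_ann w : pact X w (ordX X w) = 0.
Proof. by case: (ordX_spec w). Qed.

Lemma ordX_dvd w p : (pact X w p == 0) = (ordX X w %| p).
Proof.
have [mm ma mmin] := ordX_spec w; set m := ordX X w in mm ma mmin *.
apply/eqP/idP => [H|/dvdpP [q ->]]; last by rewrite pactMC ma pact0w.
have Hr : pact X w (p %% m) = 0.
  have E := divp_eq p m.
  by move: H; rewrite {1}E pactD pactMC ma pact0w add0r.
apply/modp_eq0P/eqP; apply: contraT => r0.
have l0 : lead_coef (p %% m) != 0 by rewrite lead_coef_eq0.
have := mmin ((lead_coef (p %% m))^-1 *: (p %% m)).
rewrite monicE lead_coefZ mulVf // eqxx pactZ Hr scaler0 => /(_ isT erefl).
rewrite size_scale ?invr_eq0 // leqNgt ltn_modp monic_neq0 //.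
Qed.

Lemma ordX_unique w a : a \is monic -> (forall p, (pact X w p == 0) = (a %| p)) ->
  ordX X w = a.
Proof.
move=> am H; apply/eqP; rewrite -eqp_monic ?ordX_monic //; apply/andP; split.
  by rewrite -ordX_dvd H.
by rewrite -H ordX_dvd.
Qed.

Lemma ordX_quot w g : g \is monic -> g %| ordX X w ->
  ordX X (pact X w g) = ordX X w %/ g.
Proof.
move=> gm gd; set m := ordX X w.
have E : m %/ g * g = m := divpK gd.
have g0 : g != 0 := monic_neq0 gm.
apply: ordX_unique.
  by rewrite -(monicMr _ gm) E ordX_monic.
move=> p; rewrite -pactM ordX_dvd -/m -{1}E [g * p]mulrC dvdp_mul2r //.
Qed.

Lemma ordX0 : ordX X 0 = 1.
Proof. by apply: ordX_unique; rewrite ?monic1 // => p; rewrite pact0w eqxx dvd1p. Qed.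

Lemma ordX_eq1 w : ordX X w = 1 -> w = 0.
Proof. by move=> E; have := ordX_ann w; rewrite E pact1. Qed.

Lemma ordX_dvd_char w : ordX X w %| char_poly X.
Proof. by rewrite -ordX_dvd pact_char. Qed.

Lemma in_cyc_pact w p : in_cyc X w (pact X w p).
Proof. by exists p. Qed.

Lemma in_cyc_trans w y x : in_cyc X w y -> in_cyc X y x -> in_cyc X w x.
Proof. by move=> [p ->] [q ->]; exists (p * q); rewrite pactM. Qed.

Lemma in_cyc_add w x y : in_cyc X w x -> in_cyc X w y -> in_cyc X w (x + y).
Proof. by move=> [p ->] [q ->]; exists (p + q); rewrite pactD. Qed.

Lemma in_cyc0 w : in_cyc X w 0.
Proof. by exists 0; rewrite pact0. Qed.

End Ord.


Section Kry.
Variables (F : finFieldType) (n : nat) (X : 'M[F]_n.+1).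
Implicit Types (p q g a b : {poly F}) (w x y u : 'rV[F]_n.+1).

Definition Kry w k : 'M[F]_(k, n.+1) := \matrix_(i < k) pact X w 'X^i.

Lemma Kry_mul w k (y : 'rV_k) : y *m Kry w k = pact X w (rVpoly y).
Proof.
rewrite mulmx_sum_row [rVpoly y]poly_def /pact linear_sum /= mulmx_sumr.
apply: eq_bigr => i _; rewrite valK /= rowK linearZ /= scalemxAr //.
Qed.

Lemma Kry_in w k x : (x <= Kry w k)%MS -> in_cyc X w x.
Proof. by case/submxP => y ->; rewrite Kry_mul; apply: in_cyc_pact. Qed.

Lemma Kry_sub w x : in_cyc X w x -> (x <= Kry w (size (ordX X w)).-1)%MS.
Proof.
case=> p ->; set m := ordX X w.
have m0 : m != 0 := ordX_neq0 X w.
have -> : pact X w p = pact X w (p %% m).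
  by rewrite {1}(divp_eq p m) pactD pactMC ordX_ann pact0w add0r.
have sz : leq (size (p %% m)) (size m).-1.
  by rewrite -ltnS prednK ?ltn_modp // size_poly_gt0.
by rewrite -(poly_rV_K sz) -Kry_mul submxMl.
Qed.

Lemma Kry_rank w : \rank (Kry w (size (ordX X w)).-1) = (size (ordX X w)).-1.
Proof.
apply/eqP; rewrite -/(row_free _) -kermx_eq0; apply/rowV0P => y /sub_kermxP.
rewrite Kry_mul => /eqP; rewrite ordX_dvd => H.
have : rVpoly y = 0.
  apply: contraTeq H => ne; apply/negP => /(dvdp_leq ne).
  have s0 : (0 < size (ordX X w))%N by rewrite size_poly_gt0 ordX_neq0.
  move=> H2; have := leq_trans H2 (size_poly _ _); by case: (size (ordX X w)) s0 => [|k] //= _; rewrite ltnn.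
by move=> E; rewrite -[y]rVpolyK E linear0.
Qed.

Lemma Kry_ker w k p : ordX X w %| p -> (Kry w k <= kermx (horner_mx X p))%MS.
Proof.
move=> H; apply/row_subP => i; rewrite rowK; apply/sub_kermxP.
have : pact X (pact X w 'X^i) p = 0 by rewrite -pactM; apply/eqP; rewrite ordX_dvd dvdp_mull.
by [].
Qed.

End Kry.

Section Dim.
Variables (F : finFieldType) (n : nat) (X : 'M[F]_n.+1).
Local Notation N := n.+1.

Lemma intertwine r (V : 'M[F]_(r.+1, N)) (A : 'M_r.+1) :
  V *m X = A *m V -> forall p, V *m horner_mx X p = horner_mx A p *m V.
Proof.
move=> VA; elim/poly_ind => [|p c IH].
  by rewrite !rmorph0 mulmx0 mul0mx.
rewrite !rmorphD !rmorphM /= !horner_mx_X !horner_mx_C.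
rewrite mulmxDr mulmxDl -!mulmxE mulmxA IH -!mulmxA VA.
by rewrite mul_mx_scalar mul_scalar_mx.
Qed.

Lemma char_dvd_pow k (A : 'M[F]_k.+1) f : horner_mx A f = 0 -> char_poly A %| f ^+ k.+1.
Proof.
move=> Af.
have [phi [[phiV phiK phiVK] phiZ phiC _]] := mx_poly_ring_isom F k.
have rt : root (map_poly scalar_mx f) A.
  by rewrite /root -Af.
have [Q EQ] := factor_theorem _ _ rt.
have E : f%:M = phiV Q *m char_poly_mx A.
  apply: (can_inj phiK); rewrite mulmxE rmorphM /= phiVK phiZ EQ; congr (_ * _).
  by rewrite /char_poly_mx rmorphB /= phiC phiZ map_polyX.
apply/dvdpP; exists (\det (phiV Q)); by rewrite -det_scalar E det_mulmx.
Qed.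

Lemma char_poly_block r s (A : 'M[F]_r) (B : 'M[F]_s) :
  char_poly (block_mx A 0 0 B) = char_poly A * char_poly B.
Proof.
rewrite /char_poly /char_poly_mx scalar_mx_block map_block_mx.
rewrite !raddf0 opp_block_mx add_block_mx !oppr0 !addr0.
by rewrite det_ublock.
Qed.

Lemma char_poly_similar m (P : 'M[F]_(m, N)) (D : 'M_m) :
  m = N -> \rank P = N -> P *m X = D *m P -> char_poly D = char_poly X.
Proof.
move=> Em; subst m => rP PX.
have Pu : P \in unitmx by rewrite -row_free_unit /row_free rP.
have ED : D = P *m X *m invmx P by rewrite PX -mulmxA mulmxV // mulmx1.
have E : char_poly_mx D = map_mx polyC P *m char_poly_mx X *m map_mx polyC (invmx P).
  rewrite ED /char_poly_mx mulmxBr mulmxBl; congr (_ - _); last by rewrite !map_mxM.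
  rewrite mul_mx_scalar -scalemxAl -map_mxM mulmxV // map_mx1 scalemx1 //.
rewrite /char_poly E !det_mulmx !det_map_mx mulrAC -rmorphM -det_mulmx mulmxV //.
by rewrite det1 rmorph1 mul1r.
Qed.

Lemma char_dvd_coprime r (A : 'M[F]_r) (V : 'M[F]_(r, N)) p q :
  row_free V -> V *m X = A *m V -> V *m horner_mx X p = 0 -> coprimep p q ->
  char_poly A %| p * q -> char_poly A %| p.
Proof.
case: r A V => [|r] A V rV VA Vp cpq dv; first by rewrite /char_poly det_mx00 dvd1p.
have hA : horner_mx A p = 0.
  by apply: (row_free_inj rV); rewrite /= -intertwine // Vp mul0mx.
have dA := char_dvd_pow hA.
have c : coprimep (char_poly A) q by apply: coprimep_dvdr dA _; apply: coprimep_expl.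
by rewrite -(Gauss_dvdpl _ c).
Qed.

Lemma rank_ker p q : p \is monic -> q \is monic -> p * q = char_poly X -> coprimep p q ->
  \rank (kermx (horner_mx X p)) = (size p).-1.
Proof.
move=> pm qm Epq cpq.
set Wp := kermx (horner_mx X p); set Wq := kermx (horner_mx X q).
have dsum : \rank (Wp + Wq)%MS = (\rank Wp + \rank Wq)%N.
  exact: mxrank_disjoint_sum (mxdirect_kermxpoly X cpq).
have full : \rank (Wp + Wq)%MS = N.
  have := kermxpolyM X cpq; rewrite /kermxpoly Epq Cayley_Hamilton => E.
  by rewrite -/Wp -/Wq -E kermx0 mxrank1.
set r := \rank Wp in dsum; set s := \rank Wq in dsum.
set Bp := row_base Wp; set Bq := row_base Wq.
set A := conjmx Bp X; set B := conjmx Bq X.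
have stp : (Bp *m X <= Bp)%MS.
  by rewrite stablemx_row_base; apply: (comm_mx_stable_kermxpoly p (comm_mx_refl X)).
have stq : (Bq *m X <= Bq)%MS.
  by rewrite stablemx_row_base; apply: (comm_mx_stable_kermxpoly q (comm_mx_refl X)).
have BpA : Bp *m X = A *m Bp by rewrite /A /conjmx mulmxKpV.
have BqB : Bq *m X = B *m Bq by rewrite /B /conjmx mulmxKpV.
have PD : col_mx Bp Bq *m X = block_mx A 0 0 B *m col_mx Bp Bq.
  by rewrite mul_col_mx mul_block_col !mul0mx addr0 add0r -BpA -BqB.
have rP : \rank (col_mx Bp Bq) = N.
  by rewrite -addsmxE (adds_eqmx (eq_row_base Wp) (eq_row_base Wq)) full.
have rs : (r + s)%N = N by rewrite -dsum full.
have cX : char_poly X = char_poly A * char_poly B.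
  by rewrite -(char_poly_similar rs rP PD) char_poly_block.
have Vp : Bp *m horner_mx X p = 0 by apply/sub_kermxP; rewrite eq_row_base.
have Vq : Bq *m horner_mx X q = 0 by apply/sub_kermxP; rewrite eq_row_base.
have dA : char_poly A %| p.
  apply: (char_dvd_coprime (row_base_free Wp) BpA Vp cpq).
  by rewrite Epq cX dvdp_mulr.
have dB : char_poly B %| q.
  apply: (char_dvd_coprime (row_base_free Wq) BqB Vq (_ : coprimep q p)).
  - by rewrite coprimep_sym.
  by rewrite mulrC Epq cX dvdp_mull.
have p0 := monic_neq0 pm; have q0 := monic_neq0 qm.
have sA : (r.+1 <= size p)%N by have := dvdp_leq p0 dA; rewrite size_char_poly.
have sB : (s.+1 <= size q)%N by have := dvdp_leq q0 dB; rewrite size_char_poly.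
have sz : ((size p + size q).-1 = N.+1)%N by rewrite -size_mul // Epq size_char_poly.
rewrite -/r; move: sz; rewrite -subn1; lia.
Qed.

End Dim.


Section Mod.
Variables (F : finFieldType) (n : nat) (X : 'M[F]_n.+1).
Implicit Types (p q g a b h : {poly F}) (w x y u : 'rV[F]_n.+1).
Local Notation c := (char_poly X).
Local Notation N := n.+1.

Lemma c_neq0 : c != 0.
Proof. exact: monic_neq0 (char_poly_monic X). Qed.

Lemma nu_le h : mirr h -> (oh h c <= N)%N.
Proof.
move=> hi; have := oh_lt_size (mirr_size hi) c_neq0.
by rewrite size_char_poly.
Qed.

Lemma ann_dvd x a p : pact X x a = 0 -> a %| p -> pact X x p = 0.
Proof. by move=> H /dvdpP [t ->]; rewrite pactMC H pact0w. Qed.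

Lemma mirr_neq0 h : mirr h -> h != 0.
Proof. by move=> hi; rewrite -size_poly_gt0 ltnW // mirr_size. Qed.

Lemma ordX_dvd_pow x h k : mirr h -> ordX X x %| h ^+ k ->
  ordX X x %| h ^+ (oh h c).
Proof.
move=> hi d1.
apply: dvdp_oh; rewrite ?ordX_neq0 ?expf_neq0 ?mirr_neq0 // => g gi.
rewrite oh_exp //; case: eqP => [->|/eqP ne].
  by apply: oh_mono; rewrite ?mirr_size ?c_neq0 ?ordX_dvd_char.
have := oh_mono (mirr_size gi) (expf_neq0 k (mirr_neq0 hi)) d1.
by rewrite oh_exp // (negPf ne).
Qed.

Lemma Vh_mem h x : mirr h -> (x <= Vh X h)%MS = (pact X x (h ^+ oh h c) == 0).
Proof.
move=> hi; rewrite /Vh; apply/sub_kermxP/eqP => H.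
  have d1 : ordX X x %| h ^+ N by rewrite -ordX_dvd; apply/eqP.
  by apply/eqP; rewrite ordX_dvd; apply: (ordX_dvd_pow hi d1).
apply: (ann_dvd H); apply: dvdp_exp2l; exact: nu_le.
Qed.

Lemma cop_split h : mirr h -> let p := h ^+ oh h c in
  [/\ p \is monic, c %/ p \is monic, p * (c %/ p) = c & coprimep p (c %/ p)].
Proof.
move=> hi p; have h1 := mirr_size hi.
have pm : p \is monic by apply: monic_exp; case: hi.
have pd : p %| c by apply: oh_dvd; rewrite ?c_neq0.
have E : p * (c %/ p) = c by rewrite divpKC.
split=> //.
  by rewrite -(monicMl _ pm) E char_poly_monic.
apply: coprimep_expl; rewrite irreducible_poly_coprime; last by case: hi.
apply/negP => /dvdpP [t Et]; apply: (negP (oh_ndvd h1 c_neq0)).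
rewrite -[X in _ %| X]E Et mulrCA; apply: dvdp_mull; rewrite exprSr; exact: dvdpp.
Qed.

Lemma rank_Wh h : mirr h ->
  \rank (kermx (horner_mx X (h ^+ oh h c))) = ((size h).-1 * oh h c)%N.
Proof.
move=> hi; have [pm qm E cp] := cop_split hi.
by rewrite (rank_ker pm qm E cp) size_exp.
Qed.

Lemma full w h : mirr h -> oh h (ordX X w) = oh h c ->
  exists w', [/\ (w' <= Vh X h)%MS, in_cyc X w w' &
    forall x, (x <= Vh X h)%MS -> in_cyc X w' x].
Proof.
move=> hi Eo; have h1 := mirr_size hi.
set nu := oh h c in Eo *; set m := ordX X w.
have pm : h ^+ nu \is monic by apply: monic_exp; case: hi.
have hd : h ^+ nu %| m by rewrite -Eo; apply: oh_dvd; rewrite ?ordX_neq0.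
set r := m %/ h ^+ nu.
have Em : r * h ^+ nu = m := divpK hd.
have rm : r \is monic by rewrite -(monicMr _ pm) Em ordX_monic.
have rd : r %| m by rewrite -Em dvdp_mulr.
set w' := pact X w r.
have ow : ordX X w' = h ^+ nu.
  by rewrite /w' ordX_quot // -/m -Em mulKp // monic_neq0.
exists w'; split; first by rewrite Vh_mem // -/nu ordX_dvd ow.
  exact: in_cyc_pact.
set K := Kry X w' (size (ordX X w')).-1.
have KW : (K <= kermx (horner_mx X (h ^+ nu)))%MS by apply: Kry_ker; rewrite ow.
have WK : (kermx (horner_mx X (h ^+ nu)) <= K)%MS.
  rewrite -(mxrank_leqif_sup KW) Kry_rank rank_Wh // ow size_exp //.
move=> x; rewrite Vh_mem // -/nu => /eqP H.
apply: (Kry_in (k := (size (ordX X w')).-1)); apply: submx_trans WK.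
by apply/sub_kermxP.
Qed.

End Mod.


Section Mod2.
Variables (F : finFieldType) (n : nat) (X : 'M[F]_n.+1).
Implicit Types (p q g a b h : {poly F}) (w x y u v : 'rV[F]_n.+1).
Local Notation c := (char_poly X).
Local Notation N := n.+1.

Lemma witness_good v h : mirr h ->
  (forall x, (x <= Vh X h)%MS -> in_cyc X v x) -> oh h (ordX X v) = oh h c.
Proof.
move=> hi Hv; have h1 := mirr_size hi; have h0 := mirr_neq0 hi.
set a0 := ordX X v; set al := oh h a0; set nu := oh h c.
have le : (al <= nu)%N by apply: oh_mono; rewrite ?c_neq0 ?ordX_dvd_char.
apply/eqP; rewrite eqn_leq le /=; rewrite leqNgt; apply/negP => lt.
have pm : h ^+ al \is monic by apply: monic_exp; case: hi.
have hd : h ^+ al %| a0 by apply: oh_dvd; rewrite ?ordX_neq0.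
set r := a0 %/ h ^+ al.
have Em : r * h ^+ al = a0 := divpK hd.
have rm : r \is monic by rewrite -(monicMr _ pm) Em ordX_monic.
have rd : r %| a0 by rewrite -Em dvdp_mulr.
set w' := pact X v r.
have ow : ordX X w' = h ^+ al.
  by rewrite /w' ordX_quot // -/a0 -Em mulKp // monic_neq0.
set K := Kry X w' (size (ordX X w')).-1.
have WK : (kermx (horner_mx X (h ^+ nu)) <= K)%MS.
  apply/row_subP => i; set x := row i _.
  have xW : (x <= kermx (horner_mx X (h ^+ nu)))%MS by apply: row_sub.
  have xV : (x <= Vh X h)%MS by rewrite Vh_mem // -/nu; apply/eqP/sub_kermxP.
  apply: Kry_sub; have [s Es] := Hv x xV.
  have ox : ordX X x %| h ^+ al.
    apply: dvdp_oh; rewrite ?ordX_neq0 ?expf_neq0 // => g gi.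
    have xn : ordX X x %| h ^+ nu by rewrite -ordX_dvd; apply/eqP/sub_kermxP.
    have xa : ordX X x %| a0 by rewrite -ordX_dvd Es -pactM pactMC ordX_ann pact0w.
    rewrite oh_exp //; case: eqP => [->|/eqP ne].
      by apply: oh_mono; rewrite ?ordX_neq0.
    have := oh_mono (mirr_size gi) (expf_neq0 nu h0) xn.
    by rewrite oh_exp // (negPf ne).
  have : pact X v (s * h ^+ al) = 0 by rewrite pactM -Es; apply/eqP; rewrite ordX_dvd.
  move=> /eqP; rewrite ordX_dvd -/a0 -Em dvdp_mul2r ?expf_neq0 // => /dvdpP [t Est].
  by rewrite Es Est pactMC; apply: in_cyc_pact.
have := mxrankS WK; rewrite Kry_rank rank_Wh // ow size_exp.
have : (0 < (size h).-1)%N by case: (size h) h1 => [|[]].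
move=> H1 H2; move: H2 lt H1; set e := (size h).-1; nia.
Qed.

Lemma dec_aux k a x : (size a <= k)%N -> a \is monic -> a %| c ->
  pact X x a = 0 -> in_prim_sum X a x.
Proof.
elim: k a x => [|k IH] a x ak am ac xa.
  by move: ak; rewrite leqn0 size_poly_eq0 (negPf (monic_neq0 am)).
case: (ltnP 1 (size a)) => sa; last first.
  have E : a = 1.
    have := size1_polyC sa; move: am; rewrite monicE /lead_coef.
    have -> : (size a).-1 = 0%N by case: (size a) sa => [|[]].
    by move=> /eqP -> ->.
  exists [::]; split => //; move: xa; rewrite E pact1 => ->; by rewrite big_nil.
have [h [hi ha]] := exists_mirr sa.
have h1 := mirr_size hi; have h0 := mirr_neq0 hi.
set kk := oh h a.
have pm : h ^+ kk \is monic by apply: monic_exp; case: hi.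
have hd : h ^+ kk %| a by apply: oh_dvd; rewrite ?monic_neq0.
set b := a %/ h ^+ kk.
have Ea : b * h ^+ kk = a := divpK hd.
have bm : b \is monic by rewrite -(monicMr _ pm) Ea.
have kk1 : (1 <= kk)%N by rewrite -oh_le ?monic_neq0 // expr1.
have cop : coprimep (h ^+ kk) b.
  apply: coprimep_expl; rewrite irreducible_poly_coprime; last by case: hi.
  apply/negP => /dvdpP [t Et]; apply: (negP (oh_ndvd h1 (monic_neq0 am))).
  rewrite -/kk -[X in _ %| X]Ea Et -mulrA exprS; exact: dvdp_mull (dvdpp _).
have [[u1 u2] /= Eu] := Bezout_eq1_coprimepP _ _ cop.
set y1 := pact X x (u2 * b); set y2 := pact X x (u1 * h ^+ kk).
have Ex : x = y2 + y1 by rewrite /y1 /y2 -pactD Eu pact1.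
have bd : b %| a by rewrite -Ea dvdp_mulr.
have y2b : pact X y2 b = 0.
  by rewrite -pactM (ann_dvd xa) // -Ea mulrAC -mulrA; exact: dvdp_mull (dvdpp _).
have sb : (size b <= k)%N.
  move: ak; rewrite -Ea size_mul ?monic_neq0 //.
  have := size_h_exp kk h1; set s1 := size b; set s2 := size (h ^+ kk).
  rewrite -subn1; lia.
have [s [Hs Es]] := IH b y2 sb bm (dvdp_trans bd ac) y2b.
have y1V : (y1 <= Vh X h)%MS.
  rewrite Vh_mem // -pactM (ann_dvd xa) // -Ea -mulrA; apply: dvdp_mull.
  rewrite dvdp_mul2l ?monic_neq0 //; apply: dvdp_exp2l; apply: oh_mono => //.
  exact: c_neq0.
exists ((h, y1) :: s); split.
  move=> hy; rewrite inE => /orP [/eqP -> /=|hs]; first by split.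
  have [A1 [A2 A3]] := Hs hy hs; split => //; split => //; exact: dvdp_trans bd.
by rewrite big_cons /= -Es addrC.
Qed.

Lemma cyc_prim u x : ordX X u %| c -> in_cyc X u x -> in_prim_sum X (ordX X u) x.
Proof.
move=> uc [p ->]; apply: (dec_aux (leqnn _) (ordX_monic X u) uc).
by rewrite -pactM pactMC ordX_ann pact0w.
Qed.

Lemma prim_cyc u a x : (forall h, mirr h -> h %| a -> oh h (ordX X u) = oh h c) ->
  in_prim_sum X a x -> in_cyc X u x.
Proof.
move=> H [s [Hs ->]]; elim: s Hs => [|[h y] s IH] Hs; first by rewrite big_nil; apply: in_cyc0.
rewrite big_cons; apply: in_cyc_add; last first.
  by apply: IH => hy hs; apply: Hs; rewrite inE hs orbT.
have [hi [ha yV]] := Hs (h, y) (mem_head _ _).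
have [w' [_ uw wy]] := full hi (H h hi ha).
exact: in_cyc_trans uw (wy y yV).
Qed.

End Mod2.


Definition cstep (s : nat * nat) : nat * nat :=
  let: (A, D) := s in let x := (A - D)%N in let m := minn x D in
  (x, (m + minn (x - m) m)%N).

Lemma step_arith A D t s : (A + D = s)%N -> (t <= D)%N -> (D < A)%N ->
  (cstep (A, D)).2 = (cstep (A, D)).1 \/
  [/\ ((cstep (A, D)).1 + (cstep (A, D)).2 = s)%N, (2 * t <= (cstep (A, D)).2)%N &
       ((cstep (A, D)).2 < (cstep (A, D)).1)%N].
Proof. rewrite /cstep /= => H1 H2 H3; case: (leqP (A - D) (2 * D)) => H4; [left|right; split]; lia. Qed.

Section Comp.
Variables (al nu N : nat).
Hypothesis alnu : (al <= nu)%N.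
Hypothesis nuN : (nu <= N)%N.
Let d0 := minn al (nu - al).
Let S k := iter k cstep (al, d0).

Lemma cstepS k : S k.+1 = cstep (S k).
Proof. by []. Qed.

Lemma comp_le k : ((S k).2 <= (S k).1)%N.
Proof.
elim: k => [|k]; first by rewrite /= /d0 geq_minl.
rewrite cstepS; case: (S k) => A D /= _; lia.
Qed.

Lemma comp_pos : ~ (0 < al /\ al = nu)%N -> forall k, (0 < (S k).1)%N -> (0 < (S k).2)%N.
Proof.
move=> ng; elim=> [|k IH]; first by rewrite /= /d0 => H; lia.
rewrite cstepS; move: IH (comp_le k); case: (S k) => A D /= IH le; lia.
Qed.

Lemma comp_good : (0 < al)%N -> al = nu -> forall k, S k = (nu, 0%N).
Proof.
move=> a0 E; elim=> [|k IH]; first by rewrite /= /d0 E subnn minn0.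
by rewrite cstepS IH /=; f_equal; lia.
Qed.

Lemma comp_zero_prev k : (S k.+1).1 = 0%N -> (S k).2 = (S k).1.
Proof.
rewrite cstepS; move: (comp_le k); case: (S k) => A D /= le; lia.
Qed.

Lemma comp_fix k : (S k).2 = (S k).1 -> forall j, (k <= j)%N -> (S j).2 = (S j).1.
Proof.
move=> E j /subnK <-; elim: (j - k)%N => [|i IH] //.
rewrite addSn cstepS; move: IH; case: (S (i + k)) => A D /= ->; lia.
Qed.

Lemma comp_end : (0 < N)%N -> ~ (0 < al /\ al = nu)%N ->
  (S (trunc_log 2 N)).2 = (S (trunc_log 2 N)).1.
Proof.
move=> N0 ng.
have P : forall k, (exists2 j, (j <= k)%N & (S j).2 = (S j).1) \/
   [/\ ((S k).1 + (S k).2 = al + d0)%N, (2 ^ k <= (S k).2)%N & ((S k).2 < (S k).1)%N].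
  elim=> [|k [[j jk Ej]|[IH1 IH2 IH3]]].
  - case: (eqVneq d0 al) => [E|ne]; first by left; exists 0%N; rewrite //= E.
    right; rewrite /= expn0; split=> //; rewrite /d0 in ne *; lia.
  - by left; exists j => //; apply: leq_trans jk _.
  - have := step_arith IH1 IH2 IH3; rewrite -!surjective_pairing -cstepS => -[E|[E1 E2 E3]].
      by left; exists k.+1.
    by right; split => //; rewrite expnS.
have [[j jL Ej]|[E1 E2 E3]] := P (trunc_log 2 N).
  exact: comp_fix Ej _ jL.
have : (2 ^ (trunc_log 2 N).+1 <= N)%N.
  rewrite expnS; rewrite /d0 in E1; lia.
move=> /(trunc_log_max (isT : (1 < 2)%N)); rewrite ltnn //.
Qed.

Lemma comp_endS : (0 < N)%N -> ~ (0 < al /\ al = nu)%N ->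
  S (trunc_log 2 N).+1 = (0%N, 0%N).
Proof.
move=> N0 ng; rewrite cstepS; have := comp_end N0 ng.
case: (S _) => A D /= ->; f_equal; lia.
Qed.

Lemma comp_zero : al = 0%N -> forall k, S k = (0%N, 0%N).
Proof.
move=> a0; elim=> [|k IH]; first by rewrite /= /d0; f_equal; lia.
by rewrite cstepS IH.
Qed.

End Comp.


Section MG.
Variable F : finFieldType.
Implicit Types p q h : {poly F}.

Lemma mgcd_monic p q : p != 0 -> mgcd p q \is monic.
Proof.
move=> p0; have g0 : gcdp p q != 0 by rewrite gcdp_eq0 negb_and p0.
by rewrite monicE /mgcd lead_coefZ mulVf // lead_coef_eq0.
Qed.

Lemma mgcd_dvdl p q : p != 0 -> mgcd p q %| p.
Proof.
move=> p0; have g0 : gcdp p q != 0 by rewrite gcdp_eq0 negb_and p0.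
by rewrite /mgcd dvdpZl ?dvdp_gcdl // invr_eq0 lead_coef_eq0.
Qed.

Lemma oh_mgcd h p q : mirr h -> p != 0 -> q != 0 ->
  oh h (mgcd p q) = minn (oh h p) (oh h q).
Proof.
move=> hi p0 q0; have g0 : gcdp p q != 0 by rewrite gcdp_eq0 negb_and p0.
rewrite /mgcd oh_scale ?oh_gcd ?mirr_size //.
by rewrite invr_eq0 lead_coef_eq0.
Qed.

Lemma eq1_oh d : d \is monic -> d = 1 <-> (forall h, mirr h -> oh h d = 0%N).
Proof.
move=> dm; split=> [-> h hi|H]; first by rewrite oh1 // mirr_size.
by apply: mon_eq => // [|h hi]; rewrite ?monic1 // H // oh1 // mirr_size.
Qed.

End MG.

Section Alg.
Variables (F : finFieldType) (n : nat) (X : 'M[F]_n.+1) (v : 'rV[F]_n.+1).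
Local Notation c := (char_poly X).
Local Notation N := n.+1.
Local Notation a0 := (ordX X v).

Definition state := ('rV[F]_n.+1 * {poly F} * {poly F} * {poly F})%type.

Definition upd (s : state) : state :=
  let: (u, g, a, d) := s in
  let g' := g * d in let a' := a %/ d in let e := mgcd a' d in
  (pact X v g', g', a', e * mgcd (a' %/ e) e).

Fixpoint st k : state :=
  if k is k'.+1 then upd (st k') else (v, 1, a0, mgcd a0 (c %/ a0)).

Definition cnd (s : state) := (s.2 == 1) || (s.2 == s.1.2).

Definition ret k := if (st k).2 == 1 then RetTrue (st k).1.1.1 (st k).1.2 k.+1
  else RetFalse F n k.+1.

Lemma loop_st fuel k m : (k <= m)%N -> (m < k + fuel)%N -> cnd (st m) ->
  (forall j, (k <= j < m)%N -> ~~ cnd (st j)) ->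
  isf_loop X v fuel k.+1 (st k).1.1.1 (st k).1.1.2 (st k).1.2 (st k).2 = ret m.
Proof.
elim: fuel k => [|f IH] k km mf cm Hj; first by move: mf; rewrite addn0 ltnNge km.
rewrite /=; case: (ltnP k m) => [lt|ge].
  have := Hj k; rewrite leqnn lt => /(_ isT); rewrite /cnd negb_or => /andP [H1 H2].
  rewrite (negPf H1) (negPf H2).
  have := IH k.+1 lt _ cm _; rewrite /=.
  case E: (st k) => [[[u g] a] d] /=.
  apply; first by rewrite addSnnS.
  by move=> j /andP [kj jm]; apply: Hj; rewrite jm (ltnW kj).
have -> : k = m by apply/eqP; rewrite eqn_leq km ge.
move: cm; rewrite /ret /cnd; case: eqP => //= _ -> //.
Qed.

Definition alpha h := oh h a0.
Definition nu h := oh h c.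
Definition dz h := minn (alpha h) (nu h - alpha h).

Lemma st_inv k : let s := st k in
  [/\ s.1.1.1 = pact X v s.1.1.2, s.1.1.2 * s.1.2 = a0,
      [&& s.1.1.2 \is monic, s.1.2 \is monic & s.2 \is monic], s.2 %| s.1.2 &
      forall h, mirr h -> (oh h s.1.2, oh h s.2) = iter k cstep (alpha h, dz h)].
Proof.
have a00 := ordX_neq0 X v.
elim: k => [|k IH].
  rewrite /=; split; rewrite ?pact1 ?mul1r ?monic1 ?ordX_monic ?mgcd_monic ?mgcd_dvdl //=.
  move=> h hi; rewrite oh_mgcd // ?oh_div ?c_neq0 ?ordX_dvd_char //; last first.
    apply: contraTneq (ordX_dvd_char X v) => E.
    have := divpK (ordX_dvd_char X v); rewrite E mul0r => E2.
    by have := c_neq0 X; rewrite -E2 eqxx.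
move: IH; rewrite [st k.+1]/=; case: (st k) => [[[u g] a] d] /=.
move=> [Eu Eg /and3P [gm am dm] da Ho].
have d0 := monic_neq0 dm; have a00' := monic_neq0 am.
set a' := a %/ d.
have Ea : a' * d = a := divpK da.
have a'm : a' \is monic by rewrite -(monicMr _ dm) Ea.
have a'0 := monic_neq0 a'm.
set e := mgcd a' d.
have em : e \is monic := mgcd_monic _ a'0.
have ed : e %| a' := mgcd_dvdl _ a'0.
set a'' := a' %/ e.
have Ea' : a'' * e = a' := divpK ed.
have a''m : a'' \is monic by rewrite -(monicMr _ em) Ea'.
have a''0 := monic_neq0 a''m.
set f := mgcd a'' e.
have fm : f \is monic := mgcd_monic _ a''0.
have fd : f %| a'' := mgcd_dvdl _ a''0.
split => //.
- by rewrite -mulrA [d * _]mulrC Ea.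
- by apply/and3P; split => //; rewrite monicMl.
- by rewrite -Ea' mulrC dvdp_mul2r ?monic_neq0.
move=> h hi; rewrite -Ho // /cstep.
rewrite /f /e oh_mul ?monic_neq0 // !oh_mgcd ?monic_neq0 //.
rewrite /a'' oh_div ?oh_mgcd // ?monic_neq0 // /a' oh_div //.
Qed.

End Alg.


Section Main.
Variables (F : finFieldType) (n : nat) (X : 'M[F]_n.+1) (v : 'rV[F]_n.+1).
Local Notation c := (char_poly X).
Local Notation N := n.+1.
Local Notation a0 := (ordX X v).
Local Notation L := (trunc_log 2 N).
Local Notation st := (st X v).
Local Notation alpha := (alpha X v).
Local Notation nu := (nu X).

Definition good h := (0 < alpha h)%N /\ alpha h = nu h.

Lemma al_nu h : mirr h -> (alpha h <= nu h)%N.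
Proof. by move=> hi; apply: oh_mono; rewrite ?mirr_size ?c_neq0 ?ordX_dvd_char. Qed.

Lemma nu_N h : mirr h -> (nu h <= N)%N.
Proof. exact: nu_le. Qed.

Lemma val_st k h : mirr h ->
  (oh h (st k).1.2, oh h (st k).2) = iter k cstep (alpha h, dz X v h).
Proof. by move=> hi; have [_ _ _ _ ->] := st_inv X v k. Qed.

Lemma st_monic k : [&& (st k).1.1.2 \is monic, (st k).1.2 \is monic & (st k).2 \is monic].
Proof. by have [_ _ H _ _] := st_inv X v k. Qed.

Lemma cnd_L1 : cnd (st L.+1).
Proof.
apply/orP; left; apply/eqP; apply/eq1_oh; first by case/and3P: (st_monic L.+1).
move=> h hi; have := val_st L.+1 hi.
case: (classic (good h)) => [[g1 g2]|ng].
  by rewrite (comp_good (al_nu hi) (nu_N hi) g1 g2) => -[].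
by rewrite (comp_endS (al_nu hi) (nu_N hi) (isT : (0 < N)%N) ng) => -[].
Qed.

Lemma first_hit : exists m, [/\ (m <= L.+1)%N, cnd (st m) &
  forall j, (j < m)%N -> ~~ cnd (st j)].
Proof.
have ex : exists m, cnd (st m) by exists L.+1; exact: cnd_L1.
have [m Hm Hmin] := ex_minnP ex.
exists m; split => //; first exact: Hmin cnd_L1.
by move=> j jm; apply/negP => Hj; have := Hmin j Hj; rewrite leqNgt jm.
Qed.

Lemma isf_ret m : (m <= L.+1)%N -> cnd (st m) -> (forall j, (j < m)%N -> ~~ cnd (st j)) ->
  IsfWitness v X c = ret X v m.
Proof.
move=> mL cm Hj; rewrite /IsfWitness.
have := @loop_st F n X v (loop_bound n) 0 m (leq0n _) _ cm _.
apply; first by rewrite add0n /loop_bound addn2 ltnS.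
by move=> j /andP [_ jm]; apply: Hj.
Qed.

Lemma good_true m : cnd (st m) -> (exists h, mirr h /\ good h) -> (st m).2 = 1.
Proof.
move=> cm [h [hi [g1 g2]]]; move: cm; rewrite /cnd => /orP [/eqP //|/eqP E].
have := val_st m hi; rewrite (comp_good (al_nu hi) (nu_N hi) g1 g2) E => -[-> E2].
by move: g1; rewrite g2 E2.
Qed.

Lemma nogood_false m : v != 0 -> cnd (st m) -> (forall j, (j < m)%N -> ~~ cnd (st j)) ->
  ~ (exists h, mirr h /\ good h) -> (st m).2 != 1.
Proof.
move=> v0 cm Hj ng; apply/negP => /eqP E.
have am : (st m).1.2 \is monic by case/and3P: (st_monic m).
have A0 : forall h, mirr h -> oh h (st m).1.2 = 0%N.
  move=> h hi; have Hv := val_st m hi.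
  have Dz : oh h (st m).2 = 0%N by rewrite E oh1 // mirr_size.
  have ngh : ~ good h by move=> gh; apply: ng; exists h.
  have P := @comp_pos _ _ _ (al_nu hi) (nu_N hi) ngh m.
  move: Hv P; rewrite Dz /dz; case: (iter _ _ _) => A D [-> <-] /=.
  by case: A => // A' /(_ isT).
case: m E cm Hj am A0 => [|m] E cm Hj am A0.
  apply: (negP v0); apply/eqP; apply: ordX_eq1.
  by apply/(eq1_oh (ordX_monic X v)) => h hi; exact: A0 h hi.
have : cnd (st m); last by move=> H; have := Hj m (ltnSn m); rewrite H.
apply/orP; right; apply/eqP.
have [m1 m2 m3] : [/\ (st m).1.1.2 \is monic, (st m).1.2 \is monic & (st m).2 \is monic].
  by apply/and3P; exact: st_monic.
apply: mon_eq => // h hi.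
have V0 := val_st m hi; have V1 := val_st m.+1 hi; rewrite /dz in V0 V1.
have e1 : (iter m.+1 cstep (alpha h, minn (alpha h) (nu h - alpha h))).1 = 0%N.
  by rewrite -V1 /= A0.
by have := comp_zero_prev (al_nu hi) (nu_N hi) e1; rewrite -V0.
Qed.

End Main.


Section Fin.
Variables (F : finFieldType) (n : nat) (X : 'M[F]_n.+1) (v : 'rV[F]_n.+1).
Local Notation c := (char_poly X).
Local Notation N := n.+1.
Local Notation a0 := (ordX X v).
Local Notation st := (st X v).
Local Notation alpha := (alpha X v).
Local Notation nu := (nu X).
Local Notation good := (good X v).

Lemma tv_good m h : (st m).2 = 1 -> mirr h -> good h -> oh h (st m).1.2 = nu h.
Proof.
move=> E hi [g1 g2]; have := val_st X v m hi.
by rewrite (comp_good (al_nu X v hi) (nu_N X hi) g1 g2) => -[].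
Qed.

Lemma tv_bad m h : (st m).2 = 1 -> mirr h -> ~ good h -> oh h (st m).1.2 = 0%N.
Proof.
move=> E hi ngh; have Hv := val_st X v m hi.
have Dz : oh h (st m).2 = 0%N by rewrite E oh1 // mirr_size.
have P := @comp_pos _ _ _ (al_nu X v hi) (nu_N X hi) ngh m.
move: Hv P; rewrite Dz /dz; case: (iter _ _ _) => A D [-> <-] /=.
by case: A => // A' /(_ isT).
Qed.

Lemma good_dvd h : mirr h -> good h -> h %| c.
Proof.
move=> hi [g1 g2]; rewrite -(expr1 h) oh_le ?mirr_size ?c_neq0 //.
by rewrite -/(nu h) -g2.
Qed.

Lemma true_props m : v != 0 -> (st m).2 = 1 -> (exists h, mirr h /\ good h) ->
  let u := (st m).1.1.1 in let a := (st m).1.2 in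
  [/\ u != 0, a = ordX X u, (1 < size a)%N & mgcd a (c %/ a) = 1] /\
  [/\ (forall x, in_cyc X u x <-> in_prim_sum X a x),
      (forall x, in_prim_sum X a x -> in_cyc X v x) & witness X v a].
Proof.
move=> v0 E [h0 [h0i h0g]] u a.
have [Eu Eg /and3P [gm am dm] _ _] := st_inv X v m.
rewrite -/u -/a in Eu Eg am.
set g := (st m).1.1.2 in Eu Eg gm.
have a00 := monic_neq0 am.
have vle : forall h, mirr h -> (oh h a <= nu h)%N.
  move=> h hi; case: (classic (good h)) => gh.
    by rewrite tv_good.
  by rewrite tv_bad.
have ac : a %| c.
  by apply: dvdp_oh; rewrite ?c_neq0 // => h hi; apply: vle.
have ga : g %| a0 by rewrite -Eg dvdp_mulr.
have oua : ordX X u = a by rewrite Eu ordX_quot // -Eg mulKp // monic_neq0.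
have a1 : a != 1.
  apply/eqP => E1; have := tv_good E h0i h0g; rewrite -/a E1 oh1 ?mirr_size //.
  by case: h0g => g1 g2 E3; move: g1; rewrite g2 -E3.
have u0 : u != 0 by apply: contra_neq a1 => u0; rewrite -oua u0 ordX0.
have goodP : forall h, mirr h -> h %| a -> oh h (ordX X u) = oh h c.
  move=> h hi ha; rewrite oua; case: (classic (good h)) => gh.
    by rewrite tv_good.
  have := tv_bad E hi gh; rewrite -/a => E0.
  by move: ha; rewrite -(expr1 h) oh_le ?mirr_size // E0.
have cycprim : forall x, in_cyc X u x <-> in_prim_sum X a x.
  move=> x; split => [H|H]; last exact: prim_cyc goodP H.
  by rewrite -oua; apply: cyc_prim => //; rewrite oua.
have primv : forall x, in_prim_sum X a x -> in_cyc X v x.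
  move=> x /cycprim H; apply: in_cyc_trans H; rewrite Eu; exact: in_cyc_pact.
split; split => //.
- have : size a != 1%N.
    apply: contra a1 => /eqP s1; have := size1_polyC (eq_leq s1).
    move=> Ea; move: am; rewrite monicE /lead_coef s1 /= => /eqP E1; by rewrite Ea E1.
  move=> H; rewrite ltn_neqAle eq_sym H /= size_poly_gt0 a00 //.
- apply/(eq1_oh (mgcd_monic _ a00)) => h hi.
  have cq0 : c %/ a != 0.
    apply: contra_neq (c_neq0 X) => E0; by rewrite -(divpK ac) E0 mul0r.
  rewrite oh_mgcd // oh_div ?c_neq0 //.
  case: (classic (good h)) => gh.
    by rewrite tv_good // subnn minn0.
  by rewrite tv_bad // min0n.
move=> h hi ha x xV; apply: primv; exists [:: (h, x)]; split.
  by move=> hy; rewrite inE => /eqP -> /=.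
by rewrite big_cons big_nil addr0.
Qed.


End Fin.

Theorem theorem7p1 (F : finFieldType) (n : nat) (X : 'M[F]_n.+1)
    (v : 'rV[F]_n.+1) :
  v != 0 ->
  let cX := char_poly X in
  let r := IsfWitness v X cX in
  [/\ (* (1) *)
      exists i, (1 <= i <= loop_bound n)%N /\
        (r = RetFalse F n i \/ exists u a, r = RetTrue u a i),
      (* (2) *)
      (exists u a i, r = RetTrue u a i) <->
        (exists a', a' \is monic /\ (1 < size a')%N /\ a' %| cX /\ witness X v a'),
      (forall u a i, r = RetTrue u a i ->
         [/\ u != 0, a = ordX X u, (1 < size a)%N & mgcd a (cX %/ a) = 1] /\
         [/\ (forall x, in_cyc X u x <-> in_prim_sum X a x),
             (forall x, in_prim_sum X a x -> in_cyc X v x) &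
             witness X v a]),
      (* (3) *)
      (exists i, r = RetFalse F n i) <->
        (forall h, monic_irr h -> h %| cX -> fcyclic X h ->
           (oh h (ordX X v) < oh h cX)%N)
    & uncyclic X -> exists i, r = RetFalse F n i].
Proof.
move=> v0 cX r.
have [m [mL cm Hj]] := first_hit X v.
have Er : r = ret X v m := isf_ret mL cm Hj.
have TT : (st X v m).2 = 1 <-> exists h, mirr h /\ good X v h.
  split => [E|G]; last exact: good_true.
  apply: NNPP => ng; have := nogood_false v0 cm Hj ng; by rewrite E eqxx.
have RT : forall u a i, r = RetTrue u a i ->
    [/\ (st X v m).2 = 1, u = (st X v m).1.1.1 & a = (st X v m).1.2].
  move=> u a i; rewrite Er /ret; case: eqP => // E [<- <- _]; by split.
have RF : forall i, r = RetFalse F n i -> (st X v m).2 != 1.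
  move=> i; rewrite Er /ret; by case: eqP.
have props : forall u a i, r = RetTrue u a i ->
    [/\ u != 0, a = ordX X u, (1 < size a)%N & mgcd a (cX %/ a) = 1] /\
    [/\ (forall x, in_cyc X u x <-> in_prim_sum X a x),
        (forall x, in_prim_sum X a x -> in_cyc X v x) & witness X v a].
  move=> u a i /RT [E -> ->]; apply: true_props => //; exact/TT.
have noG : (exists i, r = RetFalse F n i) <-> ~ exists h, mirr h /\ good X v h.
  split => [[i /RF]|ng].
    by move=> H /TT E; move: H; rewrite E eqxx.
  exists m.+1; rewrite Er /ret; case: eqP => // E.
  by exfalso; apply: ng; apply/TT.
have goodcyc : forall h, mirr h -> good X v h -> fcyclic X h.
  move=> h hi [g1 g2]; have [w' [w'V _ H]] := full hi g2.
  by exists w'.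
have P3 : (exists i, r = RetFalse F n i) <->
    (forall h, monic_irr h -> h %| cX -> fcyclic X h ->
       (oh h (ordX X v) < oh h cX)%N).
  rewrite noG; split => [ng h hi hc _|H [h [hi hg]]].
    rewrite ltn_neqAle (al_nu X v hi) andbT; apply/negP => /eqP E.
    apply: ng; exists h; split => //; split => //.
    by rewrite /alpha E -(expr1 h) -oh_le ?mirr_size ?c_neq0.
  have := H h hi (good_dvd hi hg) (goodcyc h hi hg).
  by case: hg => _; rewrite /alpha /nu => ->; rewrite ltnn.
split => //.
- exists m.+1; split; first by rewrite /loop_bound /=; move: mL; lia.
  rewrite Er /ret; case: eqP => _; [right; do 2 eexists; reflexivity | by left].
- split => [[u [a [i Hr]]]|[a' [a'm [a's [a'c a'w]]]]].
    have [[u0 oa sa mg] [_ _ wa]] := props u a i Hr.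
    exists a; split; first by rewrite oa ordX_monic.
    split => //; split => //.
    have := ordX_dvd_char X u; by rewrite -oa.
  have [h [hi ha]] := exists_mirr a's.
  have hc : h %| cX := dvdp_trans ha a'c.
  have Eg := witness_good hi (a'w h hi ha).
  have hg : good X v h.
    split; last exact: Eg.
    by rewrite /alpha Eg -(expr1 h) -oh_le ?mirr_size ?c_neq0.
  have E : (st X v m).2 = 1 by apply/TT; exists h.
  exists (st X v m).1.1.1, (st X v m).1.2, m.+1; by rewrite Er /ret E eqxx.
move=> unc; apply/P3 => h hi hc hf; exfalso; exact: (unc h hi hc hf).
Qed.
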